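(* Let $n$ and $0<n_1<\cdots<n_d<n$ be integers with $m_1=n_1$, $m_k=n_k-n_{k-1}$ ($2\le k\le d$), $m_{d+1}=n-n_d$, and regard $\mathrm{Flag}(n_1,\dots,n_d;n)=\{(VJ_1V^{\mathsf T},\dots,VJ_dV^{\mathsf T}):V\in\mathrm{O}(n)\}$ as a submanifold of $(\mathbb{R}^{n\times n})^d$ with the Frobenius inner product. Let $V(t)$ be a differentiable curve in $\mathrm{O}(n)$ with $\Lambda(t)=V(t)^{\mathsf T}\dot V(t)$ satisfying $\Lambda(k,k)\equiv0$ ($k=1,\dots,d+1$), $c(t)=V(t)(J_1,\dots,J_d)V(t)^{\mathsf T}$, and let $X(t)\in\mathfrak{so}(n)$ be differentiable with $X(k,k)\equiv0$. Let \[ T_3(t)=V(t)\big(\Lambda J_1X+XJ_1\Lambda,\dots,\Lambda J_dX+XJ_d\Lambda\big)V(t)^{\mathsf T}. \] Then the orthogonal projection of $T_3(t)$ onto $\mathbb{T}_{c(t)}\mathrm{Flag}(n_1,\dots,n_d;n)$ equals $V(t)(Z_1(t),\dots,Z_d(t))V(t)^{\mathsf T}$, where $Z_1,\dots,Z_d$ are symmetric with blocks \[ Z_k(p,q)=\begin{cases}-\sum_{1\le l\le d,\ l\ne k}\big(X(k,l)\Lambda(l,d+1)+\Lambda(l,k)^{\mathsf T}X(d+1,l)^{\mathsf T}\big), & p=k,\ q=d+1,\\[2pt] -\sum_{1\le l\le d,\ l\ne k}\big(X(d+1,l)\Lambda(l,k)+\Lambda(l,d+1)^{\mathsf T}X(k,l)^{\mathsf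 T}\big), & p=d+1,\ q=k,\\[2pt] 0, & \text{otherwise}.\end{cases} \]
   Context: $J_k=\operatorname{diag}(-I_{m_1},\dots,-I_{m_{k-1}},I_{m_k},-I_{m_{k+1}},\dots,-I_{m_{d+1}})$. $V(X_1,\dots,X_d)V^{\mathsf T}$ denotes $(VX_1V^{\mathsf T},\dots,VX_dV^{\mathsf T})$. For an $n\times n$ matrix $M$, $M(p,q)$ denotes its $(p,q)$ block in the partition $n=m_1+\cdots+m_{d+1}$. *)

(* Defs.v *)
From HB Require Import structures.
From mathcomp Require Import all_boot all_order all_algebra.
From mathcomp Require Import all_classical all_reals all_analysis.
Set Implicit Arguments. Unset Strict Implicit. Unset Printing Implicit Defensive.
Import Order.TTheory GRing.Theory Num.Theory.
Local Open Scope ring_scope.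

Section FlagDefs.
Variable R : realType.
Variables (n d : nat) (nb : nat -> nat).
(* nb k = n_k for 1 <= k <= d; blocks are indexed 1 .. d+1. *)

Definition bd (k : nat) : nat :=
  if k == 0%N then 0%N else if (k <= d)%N then nb k else n.

(* index i (0-based) lies in the k-th block (1 <= k <= d+1) *)
Definition inblk (k i : nat) : bool := (bd k.-1 <= i < bd k)%N.

Definition Jmat (k : nat) : 'M[R]_n :=
  \matrix_(i, j) (if i == j then (if inblk k i then 1 else -1) else 0).

(* d-tuples of n x n matrices: functions nat -> 'M_n, components 1..d used *)
Definition tup := nat -> 'M[R]_n.

Definition tup_eq (A B : tup) : Prop := forall k, (1 <= k <= d)%N -> A k = B k.

Definition tup_sub (A B : tup) : tup := fun k => A k - B k.

Definition conjt (W : 'M[R]_n) (A : tup) : tup := fun k => W *m A k *m W^T.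

Definition orthogonal_mx (W : 'M[R]_n) : Prop := W^T *m W = 1%:M.

Definition flag : set tup :=
  [set A | exists W, orthogonal_mx W /\ tup_eq A (conjt W Jmat)].

Definition frob (A B : tup) : R := \sum_(1 <= k < d.+1) \tr ((A k)^T *m B k).

Definition tangent_flag (c : tup) : set tup :=
  [set v | exists g : R -> tup,
     (forall t, flag (g t)) /\ tup_eq (g 0) c /\
     (forall k, (1 <= k <= d)%N -> forall t, derivable (fun s => g s k) t 1) /\
     tup_eq v (fun k => 'D_1 (fun s => g s k) 0)].

Definition is_orth_proj (T : set tup) (x p : tup) : Prop :=
  T p /\ forall y, T y -> frob (tup_sub x p) y = 0.

Definition Lam (V : R -> 'M[R]_n) (t : R) : 'M[R]_n := (V t)^T *m 'D_1 V t.

Definition zero_diag_blocks (M : 'M[R]_n) : Prop :=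
  forall k (i j : 'I_n), (1 <= k <= d.+1)%N -> inblk k i -> inblk k j -> M i j = 0.

Definition T3 (Vt L Xt : 'M[R]_n) : tup :=
  conjt Vt (fun k => L *m Jmat k *m Xt + Xt *m Jmat k *m L).

(* Z_k, block by block; entry (i,j) of a block product M(p,l) N(l,q) is
   \sum_{r in block l} M i r * N r j. *)
Definition Zmat (L Xt : 'M[R]_n) (k : nat) : 'M[R]_n :=
  \matrix_(i, j)
   (if inblk k i && inblk d.+1 j then
      (* -sum_{l<>k} ( X(k,l) L(l,d+1) + L(l,k)^T X(d+1,l)^T ) *)
      - \sum_(1 <= l < d.+1 | l != k)
          \sum_(r < n | inblk l r) (Xt i r * L r j + L r i * Xt j r)
    else if inblk d.+1 i && inblk k j then
      (* -sum_{l<>k} ( X(d+1,l) L(l,k) + L(l,d+1)^T X(k,l)^T ) *)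
      - \sum_(1 <= l < d.+1 | l != k)
          \sum_(r < n | inblk l r) (Xt i r * L r j + L r i * Xt j r)
    else 0).

End FlagDefs.

(* Main.v *)
Require Import Defs.
From HB Require Import structures.
From mathcomp Require Import all_boot all_order all_algebra.
From mathcomp Require Import all_classical all_reals all_analysis.
From mathcomp Require Import perm.
Import Order.TTheory GRing.Theory Num.Theory.
Local Open Scope ring_scope.
Set Implicit Arguments. Unset Strict Implicit. Unset Printing Implicit Defensive.

Section Tool.
Variable R : realType.

Lemma der_sum (I : Type) (r : seq I) (P : pred I) (F : I -> R -> R) (dF : I -> R) (t : R) :
  (forall i, P i -> is_derive t 1 (F i) (dF i)) ->
  is_derive t 1 (fun s => \sum_(i <- r | P i) F i s) (\sum_(i <- r | P i) dF i).
Proof.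
move=> h; elim: r => [|x r ih].
  have -> : (fun s => \sum_(i <- [::] | P i) F i s) = cst 0.
    by apply/funext => s; rewrite big_nil.
  by rewrite big_nil; exact: is_derive_cst.
have -> : (fun s => \sum_(i <- x :: r | P i) F i s) =
   (fun s => (if P x then F x s else 0)) + (fun s => \sum_(i <- r | P i) F i s).
  by apply/funext => s; rewrite big_cons /=; case: (P x); rewrite ?add0r.
rewrite big_cons; case Px: (P x).
  exact: is_deriveD (h x Px) ih.
rewrite -[X in is_derive _ _ _ X]add0r; apply: is_deriveD ih.
Qed.

Lemma der_prod (I : Type) (r : seq I) (P : pred I) (F : I -> R -> R) (t : R) :
  (forall i, P i -> derivable (F i) t 1) ->
  derivable (fun s => \prod_(i <- r | P i) F i s) t 1.
Proof.
move=> h; elim: r => [|x r ih].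
  have -> : (fun s => \prod_(i <- [::] | P i) F i s) = cst 1.
    by apply/funext => s; rewrite big_nil.
  exact: derivable_cst.
have -> : (fun s => \prod_(i <- x :: r | P i) F i s) =
   (fun s => (if P x then F x s else 1)) * (fun s => \prod_(i <- r | P i) F i s).
  by apply/funext => s; rewrite big_cons /=; case: (P x); rewrite ?mul1r.
apply: derivableM => //; case Px: (P x); first exact: h.
exact: derivable_cst.
Qed.

Lemma mx_entry_der m p (F : R -> 'M[R]_(m,p)) (t : R) (i : 'I_m) (j : 'I_p) :
  derivable F t 1 -> is_derive t 1 (fun s => F s i j) ('D_1 F t i j).
Proof.
move=> hF; have /derivable_mxP hij := hF.
apply: DeriveDef; first exact: hij.
by rewrite derive_mx // mxE.
Qed.

Lemma mx_der_entries m p (F : R -> 'M[R]_(m,p)) (D : 'M[R]_(m,p)) (t : R) :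
  (forall i j, is_derive t 1 (fun s => F s i j) (D i j)) ->
  derivable F t 1 /\ 'D_1 F t = D.
Proof.
move=> h.
have hF : derivable F t 1 by apply/derivable_mxP => i j; have hh := h i j; exact: ex_derive.
split => //; rewrite derive_mx //; apply/matrixP => i j; rewrite mxE.
by have hh := h i j; rewrite derive_val.
Qed.

Lemma der_mulmx m k p (F : R -> 'M[R]_(m,k)) (G : R -> 'M[R]_(k,p)) (t : R) :
  derivable F t 1 -> derivable G t 1 ->
  derivable (fun s => F s *m G s) t 1 /\
  'D_1 (fun s => F s *m G s) t = 'D_1 F t *m G t + F t *m 'D_1 G t.
Proof.
move=> hF hG; apply: mx_der_entries => i j.
have -> : (fun s => (F s *m G s) i j) = (fun s => \sum_(r < k) F s i r * G s r j).
  by apply/funext => s; rewrite mxE.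
rewrite !mxE -big_split /=.
apply: der_sum => r _.
have := is_deriveM (mx_entry_der i r hF) (mx_entry_der r j hG).
by rewrite /GRing.scale /= addrC [_ * 'D_1 F t _ _]mulrC.
Qed.


Lemma der_sumD (I : Type) (r : seq I) (P : pred I) (F : I -> R -> R) (t : R) :
  (forall i, P i -> derivable (F i) t 1) ->
  derivable (fun s => \sum_(i <- r | P i) F i s) t 1.
Proof.
move=> h.
have := @der_sum I r P F (fun i => 'D_1 (F i) t) t.
move=> H; have {}H := H (fun i Pi => derivableP (h i Pi)).
exact: ex_derive.
Qed.

Lemma der_lin m p (M0 M1 : 'M[R]_(m,p)) (t : R) :
  derivable (fun s : R => M0 + s *: M1) t 1 /\ 'D_1 (fun s : R => M0 + s *: M1) t = M1.
Proof.
apply: mx_der_entries => i j.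
have -> : (fun s : R => (M0 + s *: M1) i j) = cst (M0 i j) + (@id R) * cst (M1 i j).
  by apply/funext => s; rewrite !mxE.
have h := is_deriveD (is_derive_cst (M0 i j) t (1:R))
   (is_deriveM (is_derive_id t (1:R)) (is_derive_cst (M1 i j) t (1:R))).
move: h; rewrite /GRing.scale /= mulr0 !add0r mulr1.
by [].
Qed.

Lemma der_det m (M : R -> 'M[R]_m) (t : R) :
  (forall i j, derivable (fun s => M s i j) t 1) ->
  derivable (fun s => \det (M s)) t 1.
Proof.
move=> h; rewrite /determinant; apply: der_sumD => sigma _.
have -> : (fun s => (-1) ^+ perm.odd_perm sigma * \prod_i M s i (sigma i)) =
   cst ((-1) ^+ perm.odd_perm sigma) * (fun s => \prod_i M s i (sigma i)) by [].
apply: derivableM; first exact: derivable_cst.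
by apply: der_prod => i _; exact: h.
Qed.

Lemma der_invmx m (M : R -> 'M[R]_m) (t : R) :
  (forall s, M s \in unitmx) -> derivable M t 1 ->
  derivable (fun s => invmx (M s)) t 1.
Proof.
move=> hu hM; have /derivable_mxP hMe := hM.
apply/derivable_mxP => i j.
have -> : (fun s => invmx (M s) i j) =
   (fun s => (\det (M s))^-1) * (fun s => (-1) ^+ (j + i) * \det (row' j (col' i (M s)))).
  by apply/funext => s; rewrite /invmx hu !mxE.
apply: derivableM.
  apply: derivableV; last exact: der_det.
  by rewrite -unitfE -unitmxE.
have -> : (fun s => (-1) ^+ (j + i) * \det (row' j (col' i (M s)))) =
   cst ((-1) ^+ (j + i)) * (fun s => \det (row' j (col' i (M s)))) by [].
apply: derivableM; first exact: derivable_cst.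
apply: der_det => a b.
have -> : (fun s => row' j (col' i (M s)) a b) = (fun s => M s (lift j a) (lift i b)).
  by apply/funext => s; rewrite !mxE.
exact: hMe.
Qed.

Lemma der_tr m p (F : R -> 'M[R]_(m,p)) (t : R) :
  derivable F t 1 ->
  derivable (fun s => (F s)^T) t 1 /\ 'D_1 (fun s => (F s)^T) t = ('D_1 F t)^T.
Proof.
move=> hF; apply: mx_der_entries => i j.
have -> : (fun s => (F s)^T i j) = (fun s => F s j i) by apply/funext => s; rewrite mxE.
by rewrite mxE; exact: mx_entry_der.
Qed.

Lemma der_cstm m p (M : 'M[R]_(m,p)) (t : R) :
  derivable (fun _ : R => M) t 1 /\ 'D_1 (fun _ : R => M) t = 0.
Proof. by split; [exact: derivable_cst | exact: derive_cst]. Qed.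

End Tool.
From mathcomp Require Import zify ring lra.

Section Blocks.
Variable R : realType.
Variables (n d : nat) (nb : nat -> nat).
Hypothesis hnb : forall k, (1 <= k < d)%N -> (nb k < nb k.+1)%N.
Hypothesis hnbd : (nb d < n)%N.
Local Notation bd := (bd n d nb).
Local Notation inblk := (inblk n d nb).
Local Notation J := (@Jmat R n d nb).

Lemma nb_mono k j : (1 <= k)%N -> (k + j <= d)%N -> (nb k <= nb (k + j))%N.
Proof.
move=> hk; elim: j => [|j ih] hj; first by rewrite addn0.
have h1 := ih ltac:(lia).
have h2 : (nb (k + j) < nb (k + j).+1)%N by apply: hnb; lia.
rewrite addnS; lia.
Qed.

Lemma bd_mono k l : (k <= l)%N -> (bd k <= bd l)%N.
Proof.
move=> hkl; rewrite /Defs.bd.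
case: eqP => [_|hk]; first by [].
case: eqP => [hl|hl]; first lia.
case: ifP => hkd; case: ifP => hld.
- have := @nb_mono k (l - k) ltac:(lia) ltac:(lia).
  by rewrite subnKC.
- have := @nb_mono k (d - k) ltac:(lia) ltac:(lia).
  rewrite subnKC //; lia.
- lia.
- by [].
Qed.

Lemma blkP (i : nat) : (i < n)%N ->
  exists2 p, (1 <= p <= d.+1)%N & forall l, inblk l i = (l == p).
Proof.
move=> hi.
have ex : exists l, (i < bd l)%N.
  by exists d.+1; rewrite /Defs.bd /= ltnn.
case: (ex_minnP ex) => p hp hmin.
have p0 : p != 0%N by apply/eqP => p0; move: hp; rewrite p0.
have pd : (p <= d.+1)%N.
  by apply: hmin; rewrite /Defs.bd /= ltnn.
have hprev : (bd p.-1 <= i)%N.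
  rewrite leqNgt; apply/negP => /hmin; lia.
exists p; first lia.
move=> l; rewrite /Defs.inblk; apply/idP/eqP.
- move/andP => [h1 h2]; have := hmin l h2 => hpl.
  apply/eqP; rewrite eqn_leq hpl /=; rewrite leqNgt; apply/negP => hlp.
  have := @bd_mono p l.-1 ltac:(lia); lia.
- by move=> ->; rewrite hprev hp.
Qed.

Definition sg k (i : nat) : R := if inblk k i then 1 else -1.

Lemma JE k (i j : 'I_n) : J k i j = if i == j then sg k i else 0.
Proof. by rewrite mxE. Qed.

Lemma mulmxJ (Y : 'M[R]_n) k i j : (Y *m J k) i j = Y i j * sg k j.
Proof.
rewrite mxE (bigD1 j) //= big1 ?addr0; first by rewrite JE eqxx.
by move=> r hr; rewrite JE (negbTE hr) mulr0.
Qed.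

Lemma mulJmx (Y : 'M[R]_n) k i j : (J k *m Y) i j = sg k i * Y i j.
Proof.
rewrite mxE (bigD1 i) //= big1 ?addr0; first by rewrite JE eqxx.
by move=> r hr; rewrite JE eq_sym (negbTE hr) mul0r.
Qed.

Lemma sg2 k i : sg k i * sg k i = 1.
Proof. by rewrite /sg; case: ifP; rewrite ?mulr1 ?mulrNN ?mulr1. Qed.

Lemma JJ k : J k *m J k = 1%:M.
Proof.
apply/matrixP => i j; rewrite mulJmx JE !mxE.
by case: eqP => [->|]; rewrite ?sg2 ?mulr0.
Qed.

Lemma JC k l : J k *m J l = J l *m J k.
Proof.
apply/matrixP => i j; rewrite mulJmx mulmxJ !JE.
by case: eqP => [->|]; rewrite ?mulr0 ?mul0r // mulrC.
Qed.

Lemma Jtr k : (J k)^T = J k.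
Proof. by apply/matrixP => i j; rewrite !mxE eq_sym; case: eqP => // ->. Qed.

End Blocks.

Lemma sum_only1 (R : realType) (r : seq nat) (P : pred nat) b (F : nat -> R) :
  uniq r -> (forall l, l \in r -> l != b -> F l = 0) ->
  \sum_(l <- r | P l) F l = if (b \in r) && P b then F b else 0.
Proof.
elim: r => [|x r ih] /=; first by rewrite big_nil.
move=> /andP[xr ur] h; rewrite big_cons in_cons ih //; last first.
  by move=> l lr; apply: h; rewrite in_cons lr orbT.
case: (eqVneq x b) => [<-|xb].
- rewrite (negbTE xr) /=; case: (P x); by rewrite ?eqxx ?addr0.
- rewrite (h x (mem_head _ _) xb) /=; case: (P x); by rewrite ?add0r.
Qed.

Section Entries.
Variable R : realType.
Variables (n d : nat) (nb : nat -> nat).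
Hypothesis hnb : forall k, (1 <= k < d)%N -> (nb k < nb k.+1)%N.
Hypothesis hnbd : (nb d < n)%N.
Local Notation bd := (bd n d nb).
Local Notation inblk := (inblk n d nb).
Local Notation J := (@Jmat R n d nb).
Local Notation sg := (@sg R n d nb).
Variables (L X0 : 'M[R]_n).
Hypothesis hLs : L^T = - L.
Hypothesis hXs : X0^T = - X0.
Hypothesis hLz : zero_diag_blocks d nb L.
Hypothesis hXz : zero_diag_blocks d nb X0.

Definition Am := L *m X0 + X0 *m L.
Definition Wm k := L *m J k *m X0 + X0 *m J k *m L.
Local Notation Z := (Zmat d nb L X0).

Lemma skewE (M : 'M[R]_n) : M^T = - M -> forall i j, M j i = - M i j.
Proof. by move=> h i j; have := congr1 (fun N : 'M[R]_n => N i j) h; rewrite !mxE. Qed.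

Lemma W_entry k (i j : 'I_n) : (1 <= k <= d.+1)%N -> inblk k i || inblk k j ->
  Wm k i j = - Am i j.
Proof.
move=> hk hij; rewrite /Wm /Am !mxE opprD -!sumrN.
congr (_ + _); apply: eq_bigr => r _; rewrite mulmxJ /sg; case: ifP => hr.
- case/orP: hij => h.
  + by rewrite (hLz hk h hr) !mul0r oppr0.
  + by rewrite (hXz hk hr h) !mulr0 oppr0.
- by rewrite mulrN1 mulNr.
- case/orP: hij => h.
  + by rewrite (hXz hk h hr) !mul0r oppr0.
  + by rewrite (hLz hk hr h) !mulr0 oppr0.
- by rewrite mulrN1 mulNr.
Qed.

Lemma Zsum k (i j : 'I_n) : (1 <= k <= d)%N ->
  (inblk k i && inblk d.+1 j) || (inblk d.+1 i && inblk k j) ->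
  \sum_(1 <= l < d.+1 | l != k)
     \sum_(r < n | inblk l r) (X0 i r * L r j + L r i * X0 j r) = Am i j.
Proof.
move=> hk hij.
rewrite /Am !mxE -big_split /=.
under eq_bigr do rewrite big_mkcond /=.
rewrite exchange_big /=; apply: eq_bigr => r _.
have [q hq hqr] := blkP hnb hnbd (ltn_ord r).
under eq_bigr do rewrite hqr.
rewrite (@sum_only1 R _ _ q); last first.
- by move=> l _ /negbTE ->.
- exact: iota_uniq.
have F0 : ((q == k) || (q == d.+1)) ->
    X0 i r * L r j + L r i * X0 j r = 0.
  have [p hp hpi] := blkP hnb hnbd (ltn_ord i).
  have [p' hp' hpj] := blkP hnb hnbd (ltn_ord j).
  move: hij; rewrite !hpi !hpj => hij hqq.
  have hk' : (1 <= k <= d.+1)%N by lia.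
  have hd' : (1 <= d.+1 <= d.+1)%N by lia.
  have [e1|e2] : q = p \/ q = p'.
    by case/orP: hij => /andP[/eqP <- /eqP <-]; case/orP: hqq => /eqP ->; auto.
  - have hi : inblk q i by rewrite hpi e1.
    have hr : inblk q r by rewrite hqr.
    have hq' : (1 <= q <= d.+1)%N by [].
    by rewrite (hXz hq' hi hr) (hLz hq' hr hi) !mul0r addr0.
  - have hj : inblk q j by rewrite hpj e2.
    have hr : inblk q r by rewrite hqr.
    by rewrite (hLz hq hr hj) (hXz hq hj hr) !mulr0 addr0.
rewrite mem_index_iota.
have := skewE hLs r i; have := skewE hXs r j => e1 e2.
case: ifP => hc.
- by rewrite eqxx e1 e2; ring.
- transitivity (X0 i r * L r j + L r i * X0 j r); last by rewrite e1 e2; ring.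
  by rewrite F0 //; move: hc; case: (q == k) => //=; lia.
Qed.


Lemma ZE k (i j : 'I_n) : (1 <= k <= d)%N ->
  Z k i j = if (inblk k i && inblk d.+1 j) || (inblk d.+1 i && inblk k j)
            then - Am i j else 0.
Proof.
move=> hk; rewrite mxE; case: ifP => h1 /=; first by rewrite Zsum // h1.
by case: ifP => h2 //; rewrite Zsum // h2 orbT.
Qed.

Lemma Am_tr : Am^T = Am.
Proof.
rewrite /Am linearD /= !trmx_mul hLs hXs !mulmxN !mulNmx !opprK addrC.
by [].
Qed.

Lemma Zsym k (i j : 'I_n) : (1 <= k <= d)%N -> Z k i j = Z k j i.
Proof.
move=> hk; rewrite !ZE //.
have -> : Am j i = Am i j by rewrite -[in LHS]Am_tr mxE.
by rewrite orbC [inblk k j && _]andbC [inblk d.+1 j && _]andbC.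
Qed.

Lemma pointwise (Y : nat -> 'M[R]_n) (i j : 'I_n) :
  (forall k, (1 <= k <= d)%N -> inblk k i = inblk k j -> Y k i j = 0) ->
  (forall k l, (1 <= k <= d)%N -> (1 <= l <= d)%N -> k != l ->
      inblk k i -> inblk l j -> Y k i j + Y l i j = 0) ->
  \sum_(1 <= k < d.+1) (Wm k - Z k) i j * Y k i j = 0.
Proof.
move=> hY0 hY2.
have [p hp hpi] := blkP hnb hnbd (ltn_ord i).
have [q hq hqj] := blkP hnb hnbd (ltn_ord j).
set c := if (p <= d)%N && (q <= d)%N then - Am i j else 0.
have term : forall k, (1 <= k < d.+1)%N -> (Wm k - Z k) i j * Y k i j = c * Y k i j.
  move=> k hk; have hk' : (1 <= k <= d)%N by lia.
  case: (eqVneq (inblk k i) (inblk k j)) => e.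
    by rewrite hY0 // !mulr0.
  have hkk : (1 <= k <= d.+1)%N by lia.
  rewrite [(Wm k - Z k) i j]mxE [(- Z k) i j]mxE W_entry //; last by move: e; case: (inblk k i); case: (inblk k j).
  rewrite ZE // /c !hpi !hqj in e *.
  have e' : (k = p /\ k <> q) \/ (k <> p /\ k = q).
    by move: e; case: (k =P p) => hkp; case: (k =P q) => hkq //= _; auto.
  clear e; case: ifP => H1; case: ifP => H2; rewrite ?subrr ?subr0 ?mul0r //;
    exfalso; move: H1 H2; lia.
rewrite (eq_big_nat _ _ term) -mulr_sumr /c.
case: ifP => hpq; last by rewrite mul0r.
case: (eqVneq p q) => [epq|npq].
  rewrite big_nat big1 ?mulr0 // => k hk; apply: hY0; first lia.
  by rewrite hpi hqj epq.
have sp : forall k, (1 <= k < d.+1)%N -> Y k i j =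
   (if k == p then Y p i j else 0) + (if k == q then Y q i j else 0).
  move=> k hk; case: (eqVneq k p) => [->|hkp]; first by rewrite (negbTE npq) addr0.
  case: (eqVneq k q) => [->|hkq]; first by rewrite add0r.
  by rewrite hY0 ?addr0 // ?hpi ?hqj ?(negbTE hkp) ?(negbTE hkq) //; lia.
rewrite (eq_big_nat _ _ sp) big_split /=.
rewrite (@sum_only1 R _ xpredT p); first last.
- by move=> l _ /negbTE ->.
- exact: iota_uniq.
rewrite (@sum_only1 R _ xpredT q); first last.
- by move=> l _ /negbTE ->.
- exact: iota_uniq.
rewrite !mem_index_iota /=.
have -> : (1 <= p < d.+1)%N by lia.
have -> : (1 <= q < d.+1)%N by lia.
rewrite /= !eqxx hY2 ?mulr0 // ?hpi ?hqj //; lia.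
Qed.


Ltac fin := repeat (case: ifP => ?); rewrite /= ?mulr0 ?subrr ?mul0r ?subr0 //;
  try (exfalso; lia); lra.

Definition Om := - (4^-1) *: \sum_(1 <= k < d.+1) (J k *m Z k - Z k *m J k).

Lemma Om_entry (i j : 'I_n) :
  Om i j = - (4^-1) * \sum_(1 <= k < d.+1) (sg k i - sg k j) * Z k i j.
Proof.
rewrite /Om mxE summxE; congr (_ * _); apply: eq_bigr => k _.
by rewrite [(J k *m Z k - Z k *m J k) i j]mxE [(- (Z k *m J k)) i j]mxE mulJmx mulmxJ mulrBl [Z k i j * _]mulrC.
Qed.

Lemma Om_skew : Om^T = - Om.
Proof.
apply/matrixP => i j; rewrite [in LHS]mxE [in RHS]mxE !Om_entry.
rewrite -mulrN -sumrN; congr (_ * _); apply: eq_big_nat => k hk.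
have -> : Z k j i = Z k i j by apply: Zsym; lia.
by rewrite -mulNr opprB.
Qed.

Lemma Om_comm k : (1 <= k <= d)%N -> Om *m J k - J k *m Om = Z k.
Proof.
move=> hk; apply/matrixP => i j.
rewrite [(Om *m J k - J k *m Om) i j]mxE [(- (J k *m Om)) i j]mxE mulmxJ mulJmx Om_entry.
have [p hp hpi] := blkP hnb hnbd (ltn_ord i).
have [q hq hqj] := blkP hnb hnbd (ltn_ord j).
have hZ : forall l, (1 <= l <= d)%N -> Z l i j =
   if ((l == p) && (d.+1 == q)) || ((d.+1 == p) && (l == q)) then - Am i j else 0.
  by move=> l hl; rewrite ZE // !hpi !hqj.
have hs : forall l, sg l i = if l == p then 1 else -1 by move=> l; rewrite /sg hpi.
have ht : forall l, sg l j = if l == q then 1 else -1 by move=> l; rewrite /sg hqj.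
rewrite (@sum_only1 R _ xpredT (if q == d.+1 then p else q)); first last.
- move=> l; rewrite mem_index_iota => hl hlb.
  rewrite hZ; last by lia.
  rewrite hs ht.
  move: hlb; case: (eqVneq q d.+1) => hqd hlb;
  by repeat (case: ifP => ?); rewrite ?mulr0 ?subrr ?mul0r //; exfalso; lia.
- exact: iota_uniq.
rewrite mem_index_iota /= andbT (hZ k) // !hs !ht.
case: (eqVneq q d.+1) => hqd; case: ifP => hb.
- rewrite (hZ p); last by lia.
  rewrite ?hs ?ht.
  by fin.
- rewrite !mulr0 !mul0r subrr.
  by fin.
- rewrite (hZ q); last by lia.
  rewrite ?hs ?ht.
  by fin.
- rewrite !mulr0 !mul0r subrr.
  by fin.
Qed.

End Entries.

Section Cayley.
Variable R : realType.
Variable n : nat.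
Variable Om : 'M[R]_n.
Hypothesis hOs : Om^T = - Om.

Definition Oa : 'M[R]_n := - (2^-1) *: Om.
Definition Ob : 'M[R]_n := 2^-1 *: Om.
Definition Amat (s : R) : 'M[R]_n := 1%:M + s *: Oa.
Definition Bmat (s : R) : 'M[R]_n := 1%:M + s *: Ob.
Definition Qc (s : R) : 'M[R]_n := Bmat s *m invmx (Amat s).

Lemma Atr s : (Amat s)^T = Bmat s.
Proof.
apply/matrixP => i j; rewrite /Amat /Bmat /Oa /Ob !mxE eq_sym.
have := congr1 (fun N : 'M[R]_n => N i j) hOs; rewrite !mxE => ->.
ring.
Qed.

Lemma Btr s : (Bmat s)^T = Amat s.
Proof. by rewrite -Atr trmxK. Qed.

Lemma comm1 (M N : 'M[R]_n) : M *m N = N *m M ->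
  (1%:M + M) *m (1%:M + N) = (1%:M + N) *m (1%:M + M).
Proof.
move=> h; rewrite !mulmxDl !mulmxDr !mul1mx !mulmx1 h.
by rewrite addrACA.
Qed.

Lemma ABC s : Amat s *m Bmat s = Bmat s *m Amat s.
Proof.
apply: comm1; rewrite /Oa /Ob -!scalemxAl -!scalemxAr !scalerA.
by rewrite [s / 2 * _]mulrC.
Qed.

Lemma A_unit s : Amat s \in unitmx.
Proof.
rewrite unitmxE unitfE; apply/negP => /det0P [v vn0 vA].
have e1 : v = - (s *: (v *m Oa)).
  have : v *m Amat s = v + s *: (v *m Oa) by rewrite /Amat mulmxDr mulmx1 scalemxAr.
  by rewrite vA => /eqP; rewrite eq_sym addr_eq0 => /eqP.
set w := v *m Om *m v^T.
have hw : w^T = - w.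
  by rewrite /w !trmx_mul trmxK hOs mulNmx mulmxN mulmxA.
have w0 : w 0 0 = 0.
  have := congr1 (fun N : 'M[R]_1 => N 0 0) hw.
  rewrite [w^T 0 0]mxE [(- w) 0 0]mxE => h; lra.
have e2 : v *m v^T = (s * 2^-1) *: w.
  rewrite {1}e1 /w /Oa mulNmx -scalemxAl -scalemxAr -scalemxAl scalerA -scaleNr.
  by congr (_ *: _); ring.
have : (v *m v^T) 0 0 = 0 by rewrite e2 mxE w0 mulr0.
rewrite mxE => /psumr_eq0P h.
have h' := h (fun i _ => ltac:(by rewrite mxE -expr2 sqr_ge0)).
have hv : forall i, v 0 i = 0.
  move=> i; have := h' i isT; rewrite mxE.
  by move/eqP; rewrite mulf_eq0 orbb => /eqP.
move/eqP: vn0; apply; apply/matrixP => i j; rewrite (ord1 i) hv mxE //.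
Qed.

Lemma B_unit s : Bmat s \in unitmx.
Proof. by rewrite -Atr unitmx_tr A_unit. Qed.

Lemma Q_orth s : (Qc s)^T *m Qc s = 1%:M.
Proof.
rewrite /Qc trmx_mul trmx_inv Atr Btr !mulmxA.
rewrite -(mulmxA (invmx (Bmat s)) (Amat s) (Bmat s)) ABC mulmxA mulVmx ?B_unit //.
by rewrite mul1mx mulmxV ?A_unit.
Qed.

Lemma Q0 : Qc 0 = 1%:M.
Proof. by rewrite /Qc /Amat /Bmat !scale0r !addr0 invmx1 mulmx1. Qed.

Lemma QA s : Qc s *m Amat s = Bmat s.
Proof. by rewrite /Qc -mulmxA mulVmx ?A_unit // mulmx1. Qed.

Lemma Q_der (t : R) : derivable Qc t 1.
Proof.
have hB : derivable Bmat t 1 := (der_lin 1%:M Ob t).1.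
have hA : derivable Amat t 1 := (der_lin 1%:M Oa t).1.
exact: (der_mulmx hB (der_invmx (fun s => A_unit s) hA)).1.
Qed.

Lemma Q_D0 : 'D_1 Qc 0 = Om.
Proof.
have hA : derivable Amat 0 1 := (der_lin 1%:M Oa 0).1.
have e := (der_mulmx (F:=Qc) (G:=Amat) (@Q_der 0) hA).2.
rewrite (_ : (fun s => Qc s *m Amat s) = Bmat) in e; last first.
  by apply/funext => s; exact: QA.
have eB : 'D_1 Bmat 0 = Ob := (der_lin 1%:M Ob 0).2.
have eA : 'D_1 Amat 0 = Oa := (der_lin 1%:M Oa 0).2.
rewrite eB eA Q0 mul1mx /Amat scale0r addr0 mulmx1 in e.
have -> : 'D_1 Qc 0 = Ob - Oa by rewrite e addrK.
apply/matrixP => i j; rewrite /Ob /Oa !mxE; lra.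
Qed.

End Cayley.


Section Final.
Variable R : realType.
Variables (n d : nat) (nb : nat -> nat).
Hypothesis hnb : forall k, (1 <= k < d)%N -> (nb k < nb k.+1)%N.
Hypothesis hnbd : (nb d < n)%N.
Local Notation inblk := (inblk n d nb).
Local Notation J := (@Jmat R n d nb).

Lemma conj_mulmx (W A B : 'M[R]_n) : W^T *m W = 1%:M ->
  (W *m A *m W^T) *m (W *m B *m W^T) = W *m (A *m B) *m W^T.
Proof.
move=> h; rewrite !mulmxA -[W *m A *m W^T *m W]mulmxA h mulmx1.
by [].
Qed.

Lemma der_conj (W : R -> 'M[R]_n) (M : 'M[R]_n) (t : R) : derivable W t 1 ->
  derivable (fun s => W s *m M *m (W s)^T) t 1 /\
  'D_1 (fun s => W s *m M *m (W s)^T) t =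
    'D_1 W t *m M *m (W t)^T + W t *m M *m ('D_1 W t)^T.
Proof.
move=> hW.
have [h1 e1] := der_mulmx hW (der_cstm M t).1.
have [h2 e2] := der_tr hW.
have [h3 e3] := der_mulmx h1 h2.
split => //; rewrite e3 e1 e2 (der_cstm M t).2 mulmx0 addr0.
by [].
Qed.

Lemma main_thm (V0 L X0 : 'M[R]_n)
  (hV : V0^T *m V0 = 1%:M) (hLs : L^T = - L) (hXs : X0^T = - X0)
  (hLz : zero_diag_blocks d nb L) (hXz : zero_diag_blocks d nb X0) :
  is_orth_proj d (tangent_flag d nb (conjt V0 J))
      (T3 d nb V0 L X0) (conjt V0 (Zmat d nb L X0)).
Proof.
have hV' : V0 *m V0^T = 1%:M by apply: mulmx1C.
set Om0 := Om d nb L X0.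
have hOm : Om0^T = - Om0 by exact: Om_skew.
split.
-
  exists (fun s => conjt (V0 *m Qc Om0 s) J).
  have hQ : forall s, derivable (Qc Om0) s 1.
    move=> s; exact: (@Q_der _ _ _ hOm s).
  have hW : forall s, derivable (fun s => V0 *m Qc Om0 s) s 1.
    move=> s; exact: (der_mulmx (der_cstm V0 s).1 (hQ s)).1.
  split; [|split; [|split]].
  + move=> s; exists (V0 *m Qc Om0 s); split => //.
    rewrite /orthogonal_mx trmx_mul mulmxA -[_ *m V0^T *m V0]mulmxA hV mulmx1.
    exact: Q_orth.
  + by move=> k hk; rewrite /conjt Q0 mulmx1.
  + move=> k hk s; exact: (der_conj (J k) (hW s)).1.
  + move=> k hk; rewrite (der_conj (J k) (hW 0)).2.
    have [_ e] := der_mulmx (der_cstm V0 0).1 (hQ 0).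
    rewrite e (der_cstm V0 0).2 mul0mx add0r Q_D0 // Q0 mulmx1.
    rewrite /conjt -(Om_comm hnb hnbd hLs hXs hLz hXz hk) -/Om0.
    by rewrite trmx_mul hOm mulNmx mulmxN mulmxBr mulmxBl !mulmxA.
- move=> y [g [hfl [hg0 [hder hy]]]].
  set c := conjt V0 J.
  have comm : forall k l, (1 <= k <= d)%N -> (1 <= l <= d)%N -> forall s,
      g s k *m g s l = g s l *m g s k.
    move=> k l hk hl s; have [W [hW heq]] := hfl s.
    by rewrite (heq k hk) (heq l hl) /conjt !conj_mulmx // JC.
  have sq : forall k, (1 <= k <= d)%N -> forall s, g s k *m g s k = 1%:M.
    move=> k hk s; have [W [hW heq]] := hfl s.
    by rewrite (heq k hk) /conjt conj_mulmx // JJ mulmx1; apply: mulmx1C.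
  have Dk : forall k, (1 <= k <= d)%N -> derivable (fun s => g s k) 0 1.
    by move=> k hk; exact: hder.
  have hyk : forall k, (1 <= k <= d)%N -> 'D_1 (fun s => g s k) 0 = y k.
    by move=> k hk; rewrite (hy k hk).
  have hgk : forall k, (1 <= k <= d)%N -> g 0 k = c k.
    by move=> k hk; rewrite (hg0 k hk).
  have rel2 : forall k l, (1 <= k <= d)%N -> (1 <= l <= d)%N ->
      y k *m c l + c k *m y l = y l *m c k + c l *m y k.
    move=> k l hk hl.
    have e1 := (der_mulmx (Dk k hk) (Dk l hl)).2.
    have e2 := (der_mulmx (Dk l hl) (Dk k hk)).2.
    have E : (fun s => g s k *m g s l) = (fun s => g s l *m g s k).
      by apply/funext => s; exact: comm.
    rewrite E e2 !hyk // !hgk // in e1.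
    try by rewrite e1 addrC.
  have rel1 : forall k, (1 <= k <= d)%N -> y k *m c k + c k *m y k = 0.
    move=> k hk.
    have e1 := (der_mulmx (Dk k hk) (Dk k hk)).2.
    have E : (fun s => g s k *m g s k) = (fun _ => 1%:M).
      by apply/funext => s; exact: sq.
    rewrite E (der_cstm 1%:M 0).2 !hyk // !hgk // in e1.
    try by rewrite e1.
  set Y := fun k => V0^T *m y k *m V0.
  have cj1 : forall (M Jm : 'M[R]_n),
      V0^T *m (M *m (V0 *m Jm *m V0^T)) *m V0 = (V0^T *m M *m V0) *m Jm.
    move=> M Jm; rewrite !mulmxA -[_ *m V0^T *m V0]mulmxA hV mulmx1.
    by [].
  have cj2 : forall (M Jm : 'M[R]_n),
      V0^T *m ((V0 *m Jm *m V0^T) *m M) *m V0 = Jm *m (V0^T *m M *m V0).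
    by move=> M Jm; rewrite !mulmxA hV mul1mx.
  have R1 : forall k, (1 <= k <= d)%N -> Y k *m J k + J k *m Y k = 0.
    move=> k hk; have := congr1 (fun M => V0^T *m M *m V0) (rel1 k hk).
    by rewrite /= mulmxDr mulmxDl cj1 cj2 mulmx0 mul0mx.
  have R2 : forall k l, (1 <= k <= d)%N -> (1 <= l <= d)%N ->
      Y k *m J l + J k *m Y l = Y l *m J k + J l *m Y k.
    move=> k l hk hl; have := congr1 (fun M => V0^T *m M *m V0) (rel2 k l hk hl).
    by rewrite /= !mulmxDr !mulmxDl !cj1 !cj2.
  have hY0 : forall k (i j : 'I_n), (1 <= k <= d)%N -> inblk k i = inblk k j ->
      Y k i j = 0.
    move=> k i j hk e; have := congr1 (fun M : 'M[R]_n => M i j) (R1 k hk).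
    rewrite /= [(Y k *m J k + J k *m Y k) i j]mxE mulmxJ mulJmx [(0 : 'M[R]_n) i j]mxE.
    by rewrite /sg e; case: ifP => _ ?; lra.
  have hY2 : forall k l (i j : 'I_n), (1 <= k <= d)%N -> (1 <= l <= d)%N ->
      k != l -> inblk k i -> inblk l j -> Y k i j + Y l i j = 0.
    move=> k l i j hk hl hkl hki hlj.
    have [p hp hpi] := blkP hnb hnbd (ltn_ord i).
    have [q hq hqj] := blkP hnb hnbd (ltn_ord j).
    have hli : inblk l i = false by rewrite hpi; move: hki; rewrite hpi => /eqP <-; rewrite eq_sym (negbTE hkl).
    have hkj : inblk k j = false by rewrite hqj; move: hlj; rewrite hqj => /eqP <-; rewrite (negbTE hkl).
    have := congr1 (fun M : 'M[R]_n => M i j) (R2 k l hk hl).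
    rewrite /= [(Y k *m J l + J k *m Y l) i j]mxE [(Y l *m J k + J l *m Y k) i j]mxE.
    by rewrite !mulmxJ !mulJmx /sg hki hlj hli hkj => ?; lra.
  rewrite /frob.
  have tr_eq : forall k,
      \tr ((tup_sub (T3 d nb V0 L X0) (conjt V0 (Zmat d nb L X0)) k)^T *m y k) =
      \sum_i \sum_j (Wm d nb L X0 k - Zmat d nb L X0 k) i j * Y k i j.
    move=> k.
    have ey : y k = V0 *m Y k *m V0^T.
      by rewrite /Y !mulmxA hV' mul1mx -mulmxA hV' mulmx1.
    have et : tup_sub (T3 d nb V0 L X0) (conjt V0 (Zmat d nb L X0)) k =
        V0 *m (Wm d nb L X0 k - Zmat d nb L X0 k) *m V0^T.
      by rewrite /tup_sub /T3 /conjt mulmxBr mulmxBl.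
    have tt : forall M : 'M[R]_n, (V0 *m M *m V0^T)^T = V0 *m M^T *m V0^T.
      by move=> M; rewrite !trmx_mul trmxK mulmxA.
    rewrite et ey tt conj_mulmx //.
    rewrite mxtrace_mulC (mulmxA V0^T V0) hV mul1mx /mxtrace.
    under eq_bigr do rewrite mxE.
    rewrite exchange_big /=; apply: eq_bigr => i _; apply: eq_bigr => j _.
    by rewrite mxE.
  under eq_bigr do rewrite tr_eq.
  rewrite exchange_big /=; apply: big1 => i _.
  rewrite exchange_big /=; apply: big1 => j _.
  apply: (pointwise hnb hnbd hLs hXs hLz hXz).
  - by move=> k hk e; apply: hY0.
  - by move=> k l hk hl hkl hki hlj; apply: hY2.
Qed.



End Final.

Unset Implicit Arguments.

Theorem lemmaA2 (R : realType) (n d : nat) (nb : nat -> nat)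
  (hd : (0 < d)%N) (hnb1 : (0 < nb 1%N)%N)
  (hnb : forall k, (1 <= k < d)%N -> (nb k < nb k.+1)%N)
  (hnbd : (nb d < n)%N)
  (V X : R -> 'M[R]_n)
  (hVder : forall t, derivable V t 1)
  (hVorth : forall t, orthogonal_mx (V t))
  (hLam : forall t, zero_diag_blocks d nb (Lam V t))
  (hXder : forall t, derivable X t 1)
  (hXskew : forall t, (X t)^T = - X t)
  (hXblk : forall t, zero_diag_blocks d nb (X t)) :
  forall t : R,
    is_orth_proj d (tangent_flag d nb (conjt (V t) (@Jmat R n d nb)))
      (T3 d nb (V t) (Lam V t) (X t))
      (conjt (V t) (Zmat d nb (Lam V t) (X t))).
Proof.
move=> t.
have hLs : (Lam V t)^T = - Lam V t.
  have E : (fun s => (V s)^T *m V s) = (fun _ => 1%:M).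
    by apply/funext => s; exact: hVorth.
  have e := (der_mulmx (der_tr (hVder t)).1 (hVder t)).2.
  rewrite E (der_cstm 1%:M t).2 (der_tr (hVder t)).2 in e.
  rewrite /Lam trmx_mul trmxK.
  by apply/eqP; rewrite -addr_eq0 -e.
exact: (main_thm hnb hnbd (hVorth t) hLs (hXskew t) (hLam t) (hXblk t)).
Qed.
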